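(* Let $t,\ell,m$ be integers with $1 \le t \le \ell \le m$ and $\ell m\ge 2$. Then the minimum distance of the dual code $\widehat{C}_{\det}(t;\ell,m)^{\perp}$ equals $3$.
   Context: $q$ is a prime power. Let $\widehat{\mathcal D}_t(\ell,m)\subset\mathbb{P}^{\ell m-1}(\mathbb{F}_q)=\mathbb{P}(\mathrm{Mat}_{\ell\times m}(\mathbb{F}_q))$ be the set of points $[M]$ with $M\ne 0$ and $\mathrm{rk}(M)\le t$; let $\hat n=|\widehat{\mathcal D}_t(\ell,m)|$, enumerate its points and choose representatives $M_1,\dots,M_{\hat n}$. The determinantal code $\widehat{C}_{\det}(t;\ell,m)\subseteq\mathbb{F}_q^{\hat n}$ is the set of vectors $(f(M_1),\dots,f(M_{\hat n}))$ for $f$ ranging over linear forms in the entries of an $\ell\times m$ matrix of indeterminates. The dual code is its orthogonal complement in $\mathbb{F}_q^{\hat n}$ with respect to the standard dot product. *)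

(* Defs.v *)
From HB Require Import structures.
From mathcomp Require Import all_boot all_order all_algebra all_field.
Set Implicit Arguments. Unset Strict Implicit. Unset Printing Implicit Defensive.
Import GRing.Theory.
Local Open Scope ring_scope.

Section DetCode.
Variables (F : finFieldType) (l m n : nat).

(* [M] : 'I_n -> matrices is a choice of representatives of the points of the
   projective determinantal variety \hat D_t(l,m) in P(Mat_{l x m}(F)):
   every representative is a nonzero matrix of rank <= t, distinct indices give
   distinct projective points, and every projective point of rank <= t occurs. *)
Definition is_det_reps (t : nat) (M : 'I_n -> 'M[F]_(l, m)) : Prop :=
  [/\ (forall k, M k != 0 /\ (\rank (M k) <= t)%N),
      (forall k k' (a : F), k != k' -> M k' != a *: M k) &
      (forall A : 'M[F]_(l, m), A != 0 -> (\rank A <= t)%N ->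
          exists k (a : F), A = a *: M k)].

Definition lin_form (a X : 'M[F]_(l, m)) : F := \sum_i \sum_j a i j * X i j.

Definition det_codeword (M : 'I_n -> 'M[F]_(l, m)) (a : 'M[F]_(l, m)) : 'rV[F]_n :=
  \row_k lin_form a (M k).

Definition det_code (M : 'I_n -> 'M[F]_(l, m)) (v : 'rV[F]_n) : Prop :=
  exists a, v = det_codeword M a.

Definition dotv (u v : 'rV[F]_n) : F := \sum_k u 0 k * v 0 k.

Definition dual_code (C : 'rV[F]_n -> Prop) (c : 'rV[F]_n) : Prop :=
  forall v, C v -> dotv c v = 0.

Definition wt (c : 'rV[F]_n) : nat := #|[set k | c 0 k != 0]|.

Definition is_min_distance (C : 'rV[F]_n -> Prop) (d : nat) : Prop :=
  (exists c, [/\ C c, c != 0 & wt c = d]) /\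
  (forall c, C c -> c != 0 -> (d <= wt c)%N).

End DetCode.

(* Main.v *)
Require Import Defs.
From HB Require Import structures.
From mathcomp Require Import all_boot all_order all_algebra all_field.
From mathcomp Require Import zify.
Set Implicit Arguments. Unset Strict Implicit. Unset Printing Implicit Defensive.
Import GRing.Theory.

Section Aux.
Local Open Scope ring_scope.
Variables (F : finFieldType) (l m n : nat).

Lemma lfZ (a X : 'M[F]_(l,m)) x : lin_form a (x *: X) = x * lin_form a X.
Proof.
rewrite /lin_form mulr_sumr; apply: eq_bigr => i _.
by rewrite mulr_sumr; apply: eq_bigr => j _; rewrite mxE mulrCA.
Qed.

Lemma lfD (a X Y : 'M[F]_(l,m)) : lin_form a (X + Y) = lin_form a X + lin_form a Y.
Proof.
rewrite /lin_form -big_split; apply: eq_bigr => i _.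
by rewrite -big_split; apply: eq_bigr => j _; rewrite mxE mulrDr.
Qed.

Lemma lf0 (a : 'M[F]_(l,m)) : lin_form a 0 = 0.
Proof. by rewrite /lin_form big1 // => i _; rewrite big1 // => j _; rewrite mxE mulr0. Qed.

Lemma lf_delta i j (X : 'M[F]_(l,m)) : lin_form (delta_mx i j) X = X i j.
Proof.
rewrite /lin_form (bigD1 i) //= [X in _ + X]big1 ?addr0; last first.
  by move=> i' ne; apply: big1 => j' _; rewrite mxE (negbTE ne) mul0r.
rewrite (bigD1 j) //= big1 ?addr0; first by rewrite mxE !eqxx mul1r.
by move=> j' ne; rewrite mxE eqxx (negbTE ne) mul0r.
Qed.

Lemma dot_sum (M : 'I_n -> 'M[F]_(l,m)) (c : 'rV[F]_n) a :
  dotv c (det_codeword M a) = lin_form a (\sum_k c 0 k *: M k).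
Proof.
rewrite (big_morph (lin_form a) (lfD a) (lf0 a)) /dotv.
by apply: eq_bigr => k _; rewrite mxE lfZ.
Qed.

Lemma dual_sum (M : 'I_n -> 'M[F]_(l,m)) c :
  dual_code (det_code M) c -> \sum_k c 0 k *: M k = 0.
Proof.
move=> H; apply/matrixP => i j; rewrite summxE [RHS]mxE.
have := H (det_codeword M (delta_mx i j)) (ex_intro _ _ erefl).
by rewrite dot_sum lf_delta summxE.
Qed.

Lemma sep (A B N : 'M[F]_(l,m)) a b i j p q :
  A = a *: N -> B = b *: N -> A p q != 0 -> A i j = 0 -> B i j != 0 -> False.
Proof.
move=> -> ->; rewrite !mxE => apq aij bij.
have an0 : a != 0 by apply: contraNneq apq => ->; rewrite mul0r.
have nij : N i j != 0 by apply: contraNneq bij => ->; rewrite mulr0.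
by move/eqP: aij; rewrite mulf_eq0 (negbTE an0) (negbTE nij).
Qed.

End Aux.

Theorem mainTheorem11 (F : finFieldType) (t l m n : nat)
    (M : 'I_n -> 'M[F]_(l, m)) :
  (1 <= t)%N -> (t <= l)%N -> (l <= m)%N -> (2 <= l * m)%N ->
  is_det_reps t M ->
  is_min_distance (dual_code (det_code M)) 3.
Proof.
move=> ht htl hlm hlm2 [H1 H2 H3].
have hl : (0 < l)%N by lia.
have hm0 : (0 < m)%N by nia.
have hm1 : (1 < m)%N by nia.
Local Open Scope ring_scope.
split.
  pose i0 : 'I_l := Ordinal hl.
  pose j0 : 'I_m := Ordinal hm0.
  pose j1 : 'I_m := Ordinal hm1.
  have j01 : j0 != j1 by [].
  pose A1 : 'M[F]_(l, m) := delta_mx i0 j0.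
  pose A2 : 'M[F]_(l, m) := delta_mx i0 j1.
  pose A3 := A1 + A2.
  have e100 : A1 i0 j0 = 1 by rewrite mxE !eqxx.
  have e101 : A1 i0 j1 = 0 by rewrite mxE eqxx eq_sym (negbTE j01).
  have e200 : A2 i0 j0 = 0 by rewrite mxE eqxx (negbTE j01).
  have e201 : A2 i0 j1 = 1 by rewrite mxE !eqxx.
  have e300 : A3 i0 j0 = 1 by rewrite mxE e100 e200 addr0.
  have e301 : A3 i0 j1 = 1 by rewrite mxE e101 e201 add0r.
  have nz (A : 'M[F]_(l, m)) i j : A i j = 1 -> A != 0.
    by move=> e; apply/eqP => A0; move: e; rewrite A0 mxE => /eqP; rewrite eq_sym oner_eq0.
  have rk1 : (\rank A1 <= t)%N by rewrite mxrank_delta.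
  have rk2 : (\rank A2 <= t)%N by rewrite mxrank_delta.
  have rk3 : (\rank A3 <= t)%N.
    have -> : A3 = delta_mx i0 (0 : 'I_1) *m (delta_mx 0 j0 + delta_mx 0 j1).
      by rewrite mulmxDr !mul_delta_mx.
    by apply: leq_trans (mxrankM_maxl _ _) _; apply: leq_trans (rank_leq_col _) _.
  have [k1 [b1 E1]] := H3 A1 (nz _ _ _ e100) rk1.
  have [k2 [b2 E2]] := H3 A2 (nz _ _ _ e201) rk2.
  have [k3 [b3 E3]] := H3 A3 (nz _ _ _ e300) rk3.
  have bnz (A : 'M[F]_(l, m)) b k i j : A = b *: M k -> A i j = 1 -> b != 0.
    move=> -> e; apply/eqP => b0; move: e; rewrite b0 scale0r mxE => /eqP.
    by rewrite eq_sym oner_eq0.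
  have b1n := bnz _ _ _ _ _ E1 e100.
  have b2n := bnz _ _ _ _ _ E2 e201.
  have b3n := bnz _ _ _ _ _ E3 e300.
  have d12 : k1 != k2.
    apply/eqP => e; subst k2; apply: (sep E1 E2 (_ : A1 i0 j0 != 0) e101); by rewrite ?e100 ?e201 ?oner_eq0.
  have d13 : k1 != k3.
    apply/eqP => e; subst k3; apply: (sep E1 E3 (_ : A1 i0 j0 != 0) e101); by rewrite ?e100 ?e301 ?oner_eq0.
  have d23 : k2 != k3.
    apply/eqP => e; subst k3; apply: (sep E2 E3 (_ : A2 i0 j1 != 0) e200); by rewrite ?e201 ?e300 ?oner_eq0.
  pose c : 'rV[F]_n := \row_k (if k == k1 then b1 else if k == k2 then b2
                                else if k == k3 then - b3 else 0).
  exists c; split.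
  - move=> v [a ->]; rewrite dot_sum.
    rewrite (bigD1 k1) //= (bigD1 k2) ?d12 1?eq_sym ?d12 //= (bigD1 k3) /=; last first.
      by rewrite eq_sym d13 eq_sym d23.
    rewrite big1 /=; last first.
      move=> x /andP[/andP[x1 x2] x3]; rewrite mxE (negbTE x1) (negbTE x2) (negbTE x3).
      by rewrite scale0r.
    rewrite !mxE eqxx eq_sym (negbTE d12) eqxx eq_sym (negbTE d13) eq_sym (negbTE d23) eqxx.
    by rewrite -E1 -E2 scaleNr -E3 addr0 addrA subrr lf0.
  - apply/eqP => c0; have := congr1 (fun x : 'rV[F]_n => x 0 k1) c0.
    by rewrite !mxE eqxx; apply/eqP.
  - rewrite /wt (_ : [set _ | _] = k1 |: [set k2; k3]).
      by rewrite cardsU1 cards2 in_set2 negb_or d12 d13 d23.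
    apply/setP => x; rewrite !inE mxE.
    case: (x =P k1) => [_|n1] /=; first by rewrite b1n.
    case: (x =P k2) => [_|n2] /=; first by rewrite b2n.
    case: (x =P k3) => [_|n3] /=; first by rewrite oppr_eq0 b3n.
    by rewrite eqxx.
move=> c Hc cn0.
have Hs := dual_sum Hc.
case: (pickP (fun k => c 0 k != 0)) => [k ck|H0]; last first.
  case/eqP: cn0; apply/rowP => k; rewrite [RHS]mxE; apply/eqP.
  by move: (H0 k) => /= /negbFE.
rewrite leqNgt; apply/negP => lt3.
case: (pickP (fun k' => (k' != k) && (c 0 k' != 0))) => [k' /andP[kk' ck']|H4].
  have kk2 : k != k' by rewrite eq_sym.
  have Hz : forall x, x != k -> x != k' -> c 0 x = 0.
    move=> x xk xk'; apply/eqP; apply: contraTT lt3 => cx; rewrite -leqNgt.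
    rewrite /wt; apply: leq_trans (subset_leq_card (_ : x |: [set k; k'] \subset _)).
      by rewrite cardsU1 cards2 in_set2 negb_or xk xk' kk2.
    by apply/subsetP => y; rewrite !inE => /orP[/eqP->|/orP[/eqP->|/eqP->]].
  move: Hs; rewrite (bigD1 k) //= (bigD1 k') ?kk' //= big1 /= ?addr0; last first.
    by move=> x /andP[xk xk']; rewrite Hz // scale0r.
  move/eqP; rewrite addrC addr_eq0 => /eqP Hs.
  have E : M k' = (- c 0 k / c 0 k') *: M k.
    rewrite -[M k']scale1r -(mulVf ck') -(scalerA _ (c 0 k')) Hs scalerN scalerA -scaleNr.
    by rewrite mulrC mulNr.
  by move: (H2 k k' (- c 0 k / c 0 k') kk2); rewrite E eqxx.
move: Hs; rewrite (bigD1 k) //= big1 /= ?addr0; last first.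
  by move=> x xk; have := H4 x; rewrite /= xk /= => /negbFE/eqP->; rewrite scale0r.
move/eqP; rewrite scaler_eq0 (negbTE ck) /=.
by case: (H1 k) => /negbTE ->.
Qed.
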